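(* Let $N_0$ be a positive integer, $z\in\mathbb{C}$, $\nu\in[0,1/N_0]$, $0<b<1$, and assume that for all $t\in[b,1]$ we have $|1-tz|\le C$ for some constant $C<1$. Let $\theta = \arctan\left(\pi/|\log C|\right)$. If $m\ge1$ is an integer with $m\theta+2\pi/N_0\le\pi/2$, then the real part and the imaginary part of $\log^m(1-tz)\,(1-tz)^{-2\nu}$ each do not change sign for $t\in[b,1]$.
   Context: $\log$ and complex powers are taken with the principal branch, i.e. $(1-tz)^{-2\nu} = \exp(-2\nu\log(1-tz))$. *)

(* Defs.v *)
From Stdlib Require Import Reals Lra.
From Coquelicot Require Import Coquelicot.
Open Scope R_scope.

(* Principal argument, with values in (-PI, PI]; Arg 0 = 0 (never used at 0). *)
Definition Arg (w : C) : R :=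
  let x := Re w in let y := Im w in
  if Rlt_dec 0 x then atan (y / x)
  else if Rlt_dec x 0 then
    (if Rle_dec 0 y then atan (y / x) + PI else atan (y / x) - PI)
  else if Rlt_dec 0 y then PI / 2
  else if Rlt_dec y 0 then - (PI / 2)
  else 0.

Definition Clog (w : C) : C := (ln (Cmod w), Arg w).

Definition Cexp (w : C) : C :=
  (exp (Re w) * cos (Im w), exp (Re w) * sin (Im w)).

Definition Cpow_princ (w s : C) : C := Cexp (Cmult s (Clog w)).

Fixpoint Cpown (w : C) (m : nat) : C :=
  match m with
  | O => RtoC 1
  | S k => Cmult w (Cpown w k)
  end.

Definition no_sign_change (f : R -> R) (b : R) : Prop :=
  (forall t, b <= t <= 1 -> 0 <= f t) \/ (forall t, b <= t <= 1 -> f t <= 0).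

(* Main.v *)
Require Import Defs.
From Stdlib Require Import Reals Lra Lia.
From Coquelicot Require Import Coquelicot.
Open Scope R_scope.

Lemma atan_le x y : x <= y -> atan x <= atan y.
Proof. intros [H|H]; [left; now apply atan_increasing| subst; lra]. Qed.

Lemma polar_mult r u s v : Cmult (r*cos u, r*sin u) (s*cos v, s*sin v) = (r*s*cos(u+v), r*s*sin(u+v)).
Proof. unfold Cmult; simpl; rewrite cos_plus, sin_plus; f_equal; ring. Qed.

Lemma demoivre r u m : Cpown (r*cos u, r*sin u) m = (r^m * cos(INR m*u), r^m * sin(INR m * u)).
Proof.
  induction m as [|k IH].
  - simpl. rewrite Rmult_0_l, cos_0, sin_0. unfold RtoC. f_equal; ring.
  - change (Cpown (r * cos u, r * sin u) (S k)) with (Cmult (r * cos u, r * sin u) (Cpown (r * cos u, r * sin u) k)).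
    rewrite IH, polar_mult, S_INR. simpl pow. f_equal; f_equal; ring_simplify; auto; f_equal; ring.
Qed.

Lemma Arg_bound w : -PI <= Arg w <= PI.
Proof.
  unfold Arg. destruct w as [x y]; simpl.
  pose proof PI_RGT_0.
  destruct (Rlt_dec 0 x).
  - pose proof (atan_bound (y/x)); lra.
  - destruct (Rlt_dec x 0).
    + destruct (Rle_dec 0 y).
      * assert (y / x <= 0). { unfold Rdiv. assert (/x < 0) by (apply Rinv_lt_0_compat; lra). nra. }
        pose proof (atan_le _ _ H0). rewrite atan_0 in H1. pose proof (atan_bound (y/x)); lra.
      * assert (0 < y / x). { unfold Rdiv. assert (/x < 0) by (apply Rinv_lt_0_compat; lra). nra. }
        pose proof (atan_increasing _ _ H0). rewrite atan_0 in H1. pose proof (atan_bound (y/x)); lra.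
    + destruct (Rlt_dec 0 y); [lra|]. destruct (Rlt_dec y 0); lra.
Qed.

Lemma Arg_nonneg w : 0 <= Im w -> 0 <= Arg w.
Proof.
  unfold Arg. destruct w as [x y]; simpl. intros Hy.
  pose proof PI_RGT_0.
  destruct (Rlt_dec 0 x).
  - assert (0 <= y / x). { unfold Rdiv. assert (0 < /x) by (apply Rinv_0_lt_compat; lra). nra. }
    pose proof (atan_le _ _ H0). rewrite atan_0 in H1. lra.
  - destruct (Rlt_dec x 0).
    + destruct (Rle_dec 0 y); [|lra]. pose proof (atan_bound (y/x)); lra.
    + destruct (Rlt_dec 0 y); [lra|]. destruct (Rlt_dec y 0); lra.
Qed.

Lemma Arg_nonpos w : Im w < 0 -> Arg w <= 0.
Proof.
  unfold Arg. destruct w as [x y]; simpl. intros Hy.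
  pose proof PI_RGT_0.
  destruct (Rlt_dec 0 x).
  - assert (y / x <= 0). { unfold Rdiv. assert (0 < /x) by (apply Rinv_0_lt_compat; lra). nra. }
    pose proof (atan_le _ _ H0). rewrite atan_0 in H1. lra.
  - destruct (Rlt_dec x 0).
    + destruct (Rle_dec 0 y); [lra|]. pose proof (atan_bound (y/x)); lra.
    + destruct (Rlt_dec 0 y); [lra|]. destruct (Rlt_dec y 0); lra.
Qed.

Lemma point (w : C) (nu Th B : R) (m : nat) :
  ln (Cmod w) <= 0 ->
  (ln (Cmod w) <> 0 \/ Arg w = 0) ->
  -Th <= atan (Arg w / (- ln (Cmod w))) <= Th ->
  0 <= nu -> 2 * nu * PI <= B ->
  INR m * Th + B <= PI / 2 ->
  let F := Cmult (Cpown (Clog w) m) (Cpow_princ w (RtoC (-(2*nu)))) in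
  0 <= (-1)^m * Re F /\ (0 <= Arg w -> (-1)^m * Im F <= 0)
     /\ (Arg w <= 0 -> 0 <= (-1)^m * Im F).
Proof.
  intros H1 H2 H3 Hnu HB H5 F.
  set (a := ln (Cmod w)) in *. set (be := Arg w) in *.
  set (ph := atan (be / - a)) in *.
  assert (Hc : 0 < cos ph) by (pose proof (atan_bound (be / - a)); apply cos_gt_0; fold ph in H; lra).
  set (r := a / cos ph).
  assert (HL : Clog w = (r * cos (- ph), r * sin (- ph))).
  { unfold Clog. fold a be. rewrite cos_neg, sin_neg. unfold r. f_equal.
    - field; lra.
    - destruct H2 as [H2|H2].
      + assert (HT := tan_atan (be / - a)). fold ph in HT. unfold tan in HT.
        transitivity (- a * (be / - a)); [field; lra|]. rewrite <- HT. field. lra.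
      + unfold ph. rewrite H2. replace (0 / -a) with 0 by (unfold Rdiv; ring).
        rewrite atan_0, sin_0. ring. }
  set (E := exp (- (2 * nu) * a)). set (v := - (2 * nu) * be).
  assert (HP : Cpow_princ w (RtoC (- (2 * nu))) = (E * cos v, E * sin v)).
  { unfold Cpow_princ, Cexp, Cmult, RtoC, Clog. simpl. fold a be. unfold E, v.
    f_equal; f_equal; try f_equal; ring. }
  unfold F. rewrite HL, HP, demoivre, polar_mult. simpl.
  set (ps := INR m * ph + 2 * nu * be).
  replace (INR m * - ph + v) with (- ps) by (unfold ps, v; ring).
  rewrite cos_neg, sin_neg.
  assert (Hr : 0 <= - r). { unfold r, Rdiv. assert (0 < / cos ph) by (apply Rinv_0_lt_compat; lra). nra. }
  assert (Hs : (-1) ^ m * r ^ m = (- r) ^ m).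
  { replace (- r) with ((-1) * r) by ring. now rewrite Rpow_mult_distr. }
  assert (HE : 0 < E) by apply exp_pos.
  pose proof (pow_le _ m Hr) as Hrm.
  pose proof (pos_INR m) as Hm.
  pose proof (Arg_bound w) as Hbe. fold be in Hbe.
  pose proof PI_RGT_0.
  assert (Hbnd : - B <= 2 * nu * be <= B) by (split; nra).
  assert (Hps : - (PI/2) <= ps <= PI/2) by (unfold ps; split; nra).
  split; [|split].
  - replace ((-1) ^ m * (r ^ m * E * cos ps)) with (((-1) ^ m * r ^ m) * E * cos ps) by ring.
    rewrite Hs. pose proof (cos_ge_0 ps ltac:(lra) ltac:(lra)).
    apply Rmult_le_pos; [apply Rmult_le_pos|]; lra.
  - intros Hb. assert (0 <= ph).
    { unfold ph. rewrite <- atan_0. apply atan_le. destruct H2 as [H2|H2].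
      - unfold Rdiv. assert (0 < / - a) by (apply Rinv_0_lt_compat; lra). nra.
      - rewrite H2. unfold Rdiv; lra. }
    assert (0 <= ps) by (unfold ps; nra).
    pose proof (sin_ge_0 ps ltac:(lra) ltac:(lra)).
    replace ((-1) ^ m * (r ^ m * E * - sin ps)) with (- (((-1) ^ m * r ^ m) * E * sin ps)) by ring.
    rewrite Hs. assert (0 <= (- r) ^ m * E * sin ps) by (apply Rmult_le_pos; [apply Rmult_le_pos|]; lra). lra.
  - intros Hb. assert (ph <= 0).
    { unfold ph. rewrite <- atan_0. apply atan_le. destruct H2 as [H2|H2].
      - unfold Rdiv. assert (0 < / - a) by (apply Rinv_0_lt_compat; lra). nra.
      - rewrite H2. unfold Rdiv; lra. }
    assert (ps <= 0) by (unfold ps; nra).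
    pose proof (sin_ge_0 (- ps) ltac:(lra) ltac:(lra)) as Hsn. rewrite sin_neg in Hsn.
    replace ((-1) ^ m * (r ^ m * E * - sin ps)) with ((((-1) ^ m * r ^ m) * E * - sin ps)) by ring.
    rewrite Hs. apply Rmult_le_pos; [apply Rmult_le_pos|]; lra.
Qed.

Lemma pow_m1 m : (-1)^m = 1 \/ (-1)^m = -1.
Proof. induction m; simpl; [left; ring|destruct IHm as [H|H]; rewrite H; [right|left]; ring]. Qed.

Theorem lemmaB4 (N0 : nat) (z : C) (nu b Cst : R) (m : nat) :
  (0 < N0)%nat ->
  0 <= nu <= 1 / INR N0 ->
  0 < b < 1 ->
  Cst < 1 ->
  (forall t, b <= t <= 1 -> Cmod (Cminus (RtoC 1) (Cmult (RtoC t) z)) <= Cst) ->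
  (1 <= m)%nat ->
  INR m * atan (PI / Rabs (ln Cst)) + 2 * PI / INR N0 <= PI / 2 ->
  let f := fun t : R =>
    Cmult (Cpown (Clog (Cminus (RtoC 1) (Cmult (RtoC t) z))) m)
          (Cpow_princ (Cminus (RtoC 1) (Cmult (RtoC t) z)) (RtoC (- (2 * nu)))) in
  no_sign_change (fun t => Re (f t)) b /\ no_sign_change (fun t => Im (f t)) b.
Proof.
  intros HN Hnu Hb HC Hmod Hm Hang f.
  set (Th := atan (PI / Rabs (ln Cst))) in *.
  set (B := 2 * PI / INR N0) in *.
  pose proof PI_RGT_0 as Hpi.
  assert (HNpos : 0 < INR N0) by (apply lt_0_INR; lia).
  assert (HBnu : 2 * nu * PI <= B).
  { unfold B. unfold Rdiv in *. rewrite Rmult_1_l in Hnu. nra. }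
  assert (HTh0 : 0 <= Th).
  { unfold Th. rewrite <- atan_0. apply atan_le. unfold Rdiv.
    destruct (Req_dec (Rabs (ln Cst)) 0) as [E|E].
    - rewrite E, Rinv_0. lra.
    - assert (0 < / Rabs (ln Cst)) by (apply Rinv_0_lt_compat; pose proof (Rabs_pos (ln Cst)); lra). nra. }
  assert (Hpt : forall t, b <= t <= 1 ->
    let w := Cminus (RtoC 1) (Cmult (RtoC t) z) in
    ln (Cmod w) <= 0 /\ (ln (Cmod w) <> 0 \/ Arg w = 0) /\
    -Th <= atan (Arg w / (- ln (Cmod w))) <= Th).
  { intros t Ht w.
    destruct (Req_dec (Cmod w) 0) as [E|E].
    - assert (Hw : w = (0,0)) by (apply Cmod_eq_0; exact E).
      assert (HA : Arg w = 0).
      { rewrite Hw. unfold Arg. simpl. destruct (Rlt_dec 0 0); [lra|].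
        destruct (Rlt_dec 0 0); [lra|]. destruct (Rlt_dec 0 0); [lra|]. reflexivity. }
      assert (Hl : ln (Cmod w) = 0).
      { rewrite E. unfold ln. case Rlt_dec; intros Hr; [exfalso; exact (Rlt_irrefl 0 Hr)|reflexivity]. }
      rewrite HA, Hl. split; [lra|]. split; [right; reflexivity|].
      replace (0 / - 0) with 0 by (unfold Rdiv; ring). rewrite atan_0. lra.
    - assert (Hpos : 0 < Cmod w) by (pose proof (Cmod_ge_0 w); lra).
      assert (Hle : Cmod w <= Cst) by (apply Hmod; exact Ht).
      assert (HlnC : ln Cst < 0) by (rewrite <- ln_1; apply ln_increasing; lra).
      assert (Ha : ln (Cmod w) <= ln Cst) by (apply ln_le; lra).
      set (a := ln (Cmod w)) in *.
      split; [lra|]. split; [left; lra|].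
      pose proof (Arg_bound w) as Hbe.
      set (be := Arg w) in *.
      set (K := PI / - ln Cst).
      assert (HK : K * (- ln Cst) = PI) by (unfold K; field; lra).
      assert (HK0 : 0 <= K) by (unfold K, Rdiv; assert (0 < / - ln Cst) by (apply Rinv_0_lt_compat; lra); nra).
      set (x := be / - a).
      assert (Hx : x * (- a) = be) by (unfold x; field; lra).
      assert (-K <= x <= K) by (split; nra).
      assert (HTh : Th = atan K) by (unfold Th, K; rewrite Rabs_left by lra; reflexivity).
      split.
      + rewrite HTh. rewrite <- atan_opp. apply atan_le. lra.
      + rewrite HTh. apply atan_le. lra. }
  assert (HD : (forall t, b <= t <= 1 -> 0 <= Arg (Cminus (RtoC 1) (Cmult (RtoC t) z))) \/
               (forall t, b <= t <= 1 -> Arg (Cminus (RtoC 1) (Cmult (RtoC t) z)) <= 0)).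
  { destruct (Rlt_dec 0 (Im z)) as [Hz|Hz].
    - right. intros t Ht. apply Arg_nonpos. destruct z as [zr zi]. simpl in *. nra.
    - left. intros t Ht. apply Arg_nonneg. destruct z as [zr zi]. simpl in *. nra. }
  assert (Hall : forall t, b <= t <= 1 ->
     0 <= (-1)^m * Re (f t) /\ (0 <= Arg (Cminus (RtoC 1) (Cmult (RtoC t) z)) -> (-1)^m * Im (f t) <= 0)
     /\ (Arg (Cminus (RtoC 1) (Cmult (RtoC t) z)) <= 0 -> 0 <= (-1)^m * Im (f t))).
  { intros t Ht. destruct (Hpt t Ht) as [P1 [P2 P3]].
    apply (point _ nu Th B m P1 P2 P3 (proj1 Hnu) HBnu Hang). }
  destruct (pow_m1 m) as [Hs|Hs]; rewrite Hs in Hall; split; unfold no_sign_change.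
  - left. intros t Ht. destruct (Hall t Ht) as [A _]. lra.
  - destruct HD as [HD|HD]; [right|left]; intros t Ht; destruct (Hall t Ht) as [_ [A1 A2]];
      [specialize (A1 (HD t Ht))|specialize (A2 (HD t Ht))]; lra.
  - right. intros t Ht. destruct (Hall t Ht) as [A _]. lra.
  - destruct HD as [HD|HD]; [left|right]; intros t Ht; destruct (Hall t Ht) as [_ [A1 A2]];
      [specialize (A1 (HD t Ht))|specialize (A2 (HD t Ht))]; lra.
Qed.
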